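(* Let $d\ge 2$. For every integer $N$ there exist finite point sets $P,Q\subset\mathbb{R}^d$ that are not $(1,2)$-separable, but such that every pair of subsets $P^*\subseteq P$, $Q^*\subseteq Q$ with $|P^*|+|Q^*|\le N$ is $(1,2)$-separable. In particular, $(1,2)$-separability does not have the Helly-type property in $\mathbb{R}^d$ (its Helly number is infinite).
   Context: Finite sets $P,Q\subset\mathbb{R}^d$ are $(b,c)$-separable if there exist convex sets $S_1,\dots,S_b$ and $T_1,\dots,T_c$ with $S=\bigcup_i S_i$, $T=\bigcup_j T_j$, $S\cap T=\emptyset$, and either ($P\subseteq S$ and $Q\subseteq T$) or ($Q\subseteq S$ and $P\subseteq T$). A predicate $F$ on pairs of finite point sets has the Helly-type property in $\mathbb{R}^d$ if there is a finite $m$ such that whenever $F(P,Q)$ fails there exist $P^*\subseteq P$, $Q^*\subseteq Q$ with $|P^*|+|Q^*|\le m$ for which $F(P^*,Q^* )$ fails. *)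

(* Defs.v *)
From HB Require Import structures.
From mathcomp Require Import all_boot all_order all_algebra.
From mathcomp Require Import finmap.
From mathcomp Require Import reals.
Set Implicit Arguments. Unset Strict Implicit. Unset Printing Implicit Defensive.
Import Order.TTheory GRing.Theory Num.Theory.
Local Open Scope ring_scope.
Definition convex_set (R : realType) (d : nat) (S : 'rV[R]_d -> Prop) : Prop :=
  forall (x y : 'rV[R]_d) (t : R), S x -> S y -> 0 <= t -> t <= 1 ->
    S (t *: x + (1 - t) *: y).

Local Open Scope fset_scope.

Definition separable (R : realType) (d b c : nat) (P Q : {fset 'rV[R]_d}) : Prop :=
  exists (S : 'I_b -> 'rV[R]_d -> Prop) (T : 'I_c -> 'rV[R]_d -> Prop),
    (forall i, convex_set (S i)) /\ (forall j, convex_set (T j)) /\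
    let SU := fun x => exists i, S i x in
    let TU := fun x => exists j, T j x in
    (forall x, SU x -> TU x -> False) /\
    ( ((forall x, x \in P -> SU x) /\ (forall x, x \in Q -> TU x)) \/
      ((forall x, x \in Q -> SU x) /\ (forall x, x \in P -> TU x)) ).

Definition helly_type (R : realType) (d : nat)
  (F : {fset 'rV[R]_d} -> {fset 'rV[R]_d} -> Prop) : Prop :=
  exists m : nat, forall P Q : {fset 'rV[R]_d}, ~ F P Q ->
    exists P' Q' : {fset 'rV[R]_d},
      (P' `<=` P) /\ (Q' `<=` Q) /\ (#|` P'| + #|` Q'| <= m)%N /\ ~ F P' Q'.

(* Main.v *)
Require Import Defs.
From HB Require Import structures.
From mathcomp Require Import all_boot all_order all_algebra.
From mathcomp Require Import finmap.
From mathcomp Require Import reals trigo.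
From mathcomp Require Import ring lra zify.
From Stdlib Require Import ClassicalEpsilon.
Set Implicit Arguments. Unset Strict Implicit. Unset Printing Implicit Defensive.
Import Order.TTheory GRing.Theory Num.Theory.
Local Open Scope ring_scope.


Definition alpha (R : realType) (m : nat) : R := pi *+ 2 / (m.*2.+1)%:R.

Lemma natN (R : realType) (m : nat) : (m.*2.+1)%:R = 2 * m%:R + 1 :> R.
Proof. by rewrite -addn1 -muln2 natrD natrM mulrC. Qed.

Lemma alpha_gt0 (R : realType) m : 0 < alpha R m.
Proof. by rewrite /alpha divr_gt0 // mulrn_wgt0 // pi_gt0. Qed.

Lemma alphaN (R : realType) m : alpha R m * (2 * m%:R + 1) = pi *+ 2.
Proof. rewrite /alpha -natN mulfVK //; by rewrite pnatr_eq0. Qed.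

Lemma cos_2pi (R : realType) (x : R) : cos (x + pi *+ 2) = cos x.
Proof. exact: cosD2pi. Qed.

Lemma cos_m2pi (R : realType) (x : R) : cos (x - pi *+ 2) = cos x.
Proof. by rewrite -[in RHS](subrK (pi *+ 2) x) cos_2pi. Qed.

Lemma half_le (R : realType) m : m%:R * alpha R m / 2 <= pi / 2.
Proof.
have h := alphaN R m. have ha := alpha_gt0 R m.
have hp := pi_gt0 R. rewrite mulr2n in h. nra.
Qed.

Lemma half1_le (R : realType) m : (m%:R + 1) * alpha R m / 2 <= pi.
Proof.
have h := alphaN R m. have ha := alpha_gt0 R m.
have hp := pi_gt0 R. have hm : 0 <= m%:R :> R by []. rewrite mulr2n in h. nra.
Qed.

Lemma cos_gt (R : realType) m (y : R) : `|y| < m%:R / 2 ->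
  cos (m%:R * alpha R m / 2) < cos (y * alpha R m).
Proof.
move=> hy. have ha := alpha_gt0 R m. have hl := half_le R m.
have hp := pi_gt0 R.
rewrite -(cos_norm (y * _)) normrM (gtr0_norm ha).
have h1 : `|y| * alpha R m < m%:R * alpha R m / 2.
  by rewrite mulrAC ltr_pM2r.
have h0 : 0 <= `|y| * alpha R m by rewrite mulr_ge0 // ltW.
rewrite ltr_cos // in_itv /=; apply/andP; split; lra.
Qed.


Lemma h_ge0 (R : realType) m : 0 <= m%:R * alpha R m / 2.
Proof. have ha := alpha_gt0 R m. have hm : 0 <= m%:R :> R by []. nra. Qed.

Lemma cos_lt (R : realType) m :
  cos (- ((m%:R + 1) * alpha R m / 2)) < cos (m%:R * alpha R m / 2).
Proof.
have ha := alpha_gt0 R m. have hl := half1_le R m. have hp := pi_gt0 R.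
rewrite cosN.
have h2 := h_ge0 R m.
rewrite ltr_cos; [nra|rewrite in_itv /=; apply/andP; split; nra..].
Qed.

Definition i1 (d' : nat) : 'I_(d'.+2) := @Ordinal d'.+2 1 isT.

Definition pt (R : realType) (d' : nat) (a b : R) : 'rV[R]_(d'.+2) :=
  \row_(i < d'.+2) (if val i == 0%N then a else if val i == 1%N then b else 0).

Definition lin (R : realType) (d' : nat) (phi : R) (x : 'rV[R]_(d'.+2)) : R :=
  x ord0 ord0 * cos phi + x ord0 (i1 d') * sin phi.

Lemma lin_pt (R : realType) d' phi (a b : R) :
  lin phi (pt d' a b) = a * cos phi + b * sin phi.
Proof. by rewrite /lin !mxE. Qed.

Lemma lin_comb (R : realType) d' phi (t u : R) (x y : 'rV[R]_(d'.+2)) :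
  lin phi (t *: x + u *: y) = t * lin phi x + u * lin phi y.
Proof. rewrite /lin !mxE; ring. Qed.

Definition sp (R : realType) d' m (k : nat) : 'rV[R]_(d'.+2) :=
  pt d' (cos (k%:R * alpha R m)) (sin (k%:R * alpha R m)).

Definition pp (R : realType) d' m (k : nat) : 'rV[R]_(d'.+2) :=
  (1/2) *: sp R d' m k + (1 - 1/2) *: sp R d' m ((k + m) %% m.*2.+1).

Lemma lin_sp (R : realType) d' m phi k :
  lin phi (sp R d' m k) = cos (k%:R * alpha R m - phi).
Proof. by rewrite lin_pt cosB. Qed.

Lemma lin_pp (R : realType) d' m phi k :
  lin phi (pp R d' m k) <= cos (m%:R * alpha R m / 2).
Proof.
rewrite /pp lin_comb !lin_sp.
set a := alpha R m.
have -> : cos (((k + m) %% m.*2.+1)%:R * a - phi) = cos (k%:R * a + m%:R * a - phi).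
  have hN := alphaN R m.
  have e : (k + m)%:R = ((k+m) %/ m.*2.+1)%:R * (2 * m%:R + 1) + ((k+m) %% m.*2.+1)%:R :> R.
    by rewrite -natN -natrM -natrD -divn_eq.
  have -> : k%:R * a + m%:R * a - phi = (k+m)%:R * a - phi by rewrite natrD; ring.
  rewrite e -(periodicn (@cosD2pi R) ((k + m) %/ m.*2.+1)).
  congr cos. rewrite -mulr_natl -hN /a; ring.
set A := k%:R * a - phi + m%:R * a / 2.
set h := m%:R * a / 2.
have -> : k%:R * a - phi = A - h by rewrite /A /h; field.
have -> : k%:R * a + m%:R * a - phi = A + h by rewrite /A /h; field.
rewrite (cosB A h) (cosD A h).
have hc : 0 <= cos h.
  apply: cos_ge0_pihalf. have h1 : h <= pi / 2 := half_le R m. have hp := pi_gt0 R.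
  have h0 : 0 <= h := h_ge0 R m.
  apply/andP; split; lra.
have hp : 0 <= (1 - cos A) * cos h by apply: mulr_ge0 => //; rewrite subr_ge0 cos_le1.
nra.
Qed.


Definition phi1 (R : realType) m (j : nat) : R := (j%:R + (m%:R + 1) / 2) * alpha R m.
Definition phi2 (R : realType) m (j : nat) : R := (j%:R - (m%:R + 1) / 2) * alpha R m.
Definition cc (R : realType) m : R := cos (m%:R * alpha R m / 2).

Lemma leR (R : realType) (a b : nat) : (a <= b)%N -> a%:R <= b%:R :> R.
Proof. by rewrite ler_nat. Qed.

Lemma ltR (R : realType) (a b : nat) : (a < b)%N -> a%:R + 1 <= b%:R :> R.
Proof.
move=> h; have -> : (a%:R + 1 : R) = (a.+1)%:R by rewrite -addn1 natrD.
by rewrite ler_nat.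
Qed.

Lemma cover_lem (R : realType) d' m i j : (i < m.*2.+1)%N -> (j < m.*2.+1)%N -> i != j ->
  cc R m < lin (phi1 R m j) (sp R d' m i) \/ cc R m < lin (phi2 R m j) (sp R d' m i).
Proof.
move=> hi hj hij; rewrite !lin_sp /cc /phi1 /phi2.
have hN := alphaN R m.
set a := alpha R m.
have hiR : i%:R + 1 <= 2 * m%:R + 1 :> R by rewrite -natN; exact: ltR.
have hjR : j%:R + 1 <= 2 * m%:R + 1 :> R by rewrite -natN; exact: ltR.
have hi0 : 0 <= i%:R :> R by []. have hj0 : 0 <= j%:R :> R by []. have hm0 : 0 <= m%:R :> R by [].
have [hji|hij'] := ltnP j i.
- have hjiR := ltR R hji.
  have [hc|hc] := leqP i (j + m).
  + have hcR := leR R hc. rewrite natrD in hcR.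
    left. have -> : i%:R * a - (j%:R + (m%:R + 1) / 2) * a = (i%:R - j%:R - (m%:R + 1) / 2) * a.
      by rewrite /a; field.
    apply: cos_gt. rewrite ltr_norml; apply/andP; split; lra.
  + have hcR := ltR R hc. rewrite natrD in hcR.
    right. have -> : i%:R * a - (j%:R - (m%:R + 1) / 2) * a =
      (i%:R - j%:R + (m%:R + 1) / 2 - (2 * m%:R + 1)) * a + pi *+ 2.
      by rewrite -hN /a; field.
    rewrite cos_2pi. apply: cos_gt. rewrite ltr_norml; apply/andP; split; lra.
- have hijR := leR R hij'.
  have hne : i%:R <> j%:R :> R by move=> /eqP; rewrite eqr_nat (negPf hij).
  have hijR' : i%:R + 1 <= j%:R :> R.
    apply: ltR. by rewrite ltn_neqAle hij hij'.
  have [hc|hc] := leqP j (i + m).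
  + have hcR := leR R hc. rewrite natrD in hcR.
    right. have -> : i%:R * a - (j%:R - (m%:R + 1) / 2) * a = (i%:R - j%:R + (m%:R + 1) / 2) * a.
      by rewrite /a; field.
    apply: cos_gt. rewrite ltr_norml; apply/andP; split; lra.
  + have hcR := ltR R hc. rewrite natrD in hcR.
    left. have -> : i%:R * a - (j%:R + (m%:R + 1) / 2) * a =
      (i%:R - j%:R - (m%:R + 1) / 2 + (2 * m%:R + 1)) * a - pi *+ 2.
      by rewrite -hN /a; field.
    rewrite cos_m2pi. apply: cos_gt. rewrite ltr_norml; apply/andP; split; lra.
Qed.

Lemma self_out (R : realType) d' m j :
  lin (phi1 R m j) (sp R d' m j) < cc R m.
Proof.
rewrite lin_sp /cc /phi1.
have -> : j%:R * alpha R m - (j%:R + (m%:R + 1) / 2) * alpha R m =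
  - ((m%:R + 1) * alpha R m / 2) by field.
exact: cos_lt.
Qed.



Local Open Scope fset_scope.

Lemma self_out2 (R : realType) d' m j :
  lin (phi2 R m j) (sp R d' m j) < cc R m.
Proof.
rewrite lin_sp /cc /phi2.
have -> : j%:R * alpha R m - (j%:R - (m%:R + 1) / 2) * alpha R m =
  - (- ((m%:R + 1) * alpha R m / 2)) by field.
rewrite cosN; exact: cos_lt.
Qed.

Lemma sp_inj (R : realType) d' m i j : (i < m.*2.+1)%N -> (j < m.*2.+1)%N ->
  sp R d' m i = sp R d' m j -> i = j.
Proof.
move=> hi hj e; apply/eqP; apply/negPn/negP => hne.
have := @cover_lem R d' m i j hi hj hne; rewrite e.
have := @self_out R d' m j; have := @self_out2 R d' m j.
by move=> h1 h2 [h|h]; [have := lt_trans h h2 | have := lt_trans h h1]; rewrite ltxx.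
Qed.

Definition Qs (R : realType) d' m : {fset 'rV[R]_(d'.+2)} :=
  [fset x in map (sp R d' m) (iota 0 m.*2.+1)].
Definition Ps (R : realType) d' m : {fset 'rV[R]_(d'.+2)} :=
  [fset x in map (pp R d' m) (iota 0 m.*2.+1)].

Lemma inQs (R : realType) d' m x :
  (x \in Qs R d' m) <-> exists2 k, (k < m.*2.+1)%N & x = sp R d' m k.
Proof.
rewrite /Qs in_fset; split.
- by move=> /mapP [k]; rewrite mem_iota add0n => hk ->; exists k.
- by move=> [k hk ->]; apply/mapP; exists k => //; rewrite mem_iota add0n.
Qed.

Lemma inPs (R : realType) d' m x :
  (x \in Ps R d' m) <-> exists2 k, (k < m.*2.+1)%N & x = pp R d' m k.
Proof.
rewrite /Ps in_fset; split.
- by move=> /mapP [k]; rewrite mem_iota add0n => hk ->; exists k.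
- by move=> [k hk ->]; apply/mapP; exists k => //; rewrite mem_iota add0n.
Qed.

Lemma card_Qs (R : realType) d' m : #|` Qs R d' m| = m.*2.+1.
Proof.
rewrite /Qs card_fseq undup_id ?size_map ?size_iota //.
rewrite map_inj_in_uniq ?iota_uniq // => i j.
rewrite !mem_iota !add0n; exact: sp_inj.
Qed.

Lemma convex_half (R : realType) d' (phi c : R) :
  convex_set (fun x : 'rV[R]_(d'.+2) => c < lin phi x).
Proof.
move=> x y t hx hy t0 t1; rewrite lin_comb.
have h1 : 0 <= t * (lin phi x - c) by apply: mulr_ge0; lra.
have h2 : 0 <= (1 - t) * (lin phi y - c) by apply: mulr_ge0; lra.
have [tz|tp] := eqVneq t 0.
- rewrite tz; lra.
- have : 0 < t * (lin phi x - c).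
    have tp' : 0 < t by rewrite lt_neqAle eq_sym tp t0.
    by apply: mulr_gt0; lra.
  nra.
Qed.

Lemma convex_wedge (R : realType) d' (phi1 phi2 c : R) :
  convex_set (fun x : 'rV[R]_(d'.+2) => lin phi1 x <= c /\ lin phi2 x <= c).
Proof.
move=> x y t [hx1 hx2] [hy1 hy2] t0 t1; rewrite !lin_comb.
have h1 : 0 <= t * (c - lin phi1 x) by apply: mulr_ge0; lra.
have h2 : 0 <= (1 - t) * (c - lin phi1 y) by apply: mulr_ge0; lra.
have h3 : 0 <= t * (c - lin phi2 x) by apply: mulr_ge0; lra.
have h4 : 0 <= (1 - t) * (c - lin phi2 y) by apply: mulr_ge0; lra.
split; nra.
Qed.

Lemma I2_cases (j : 'I_2) : j = ord0 \/ j = ord_max.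
Proof. by case: j => [[|[|//]]] ?; [left|right]; apply/val_inj. Qed.

Lemma I1_eq (j : 'I_1) : j = ord0.
Proof. by apply/val_inj; case: j => [[|]]. Qed.

Lemma nonsep (R : realType) d' m : ~ separable 1 2 (Ps R d' m) (Qs R d' m).
Proof.
move=> [S [T [hS [hT /= [hdisj hcase]]]]].
set n := m.*2.+1.
have mid : forall (U : 'rV[R]_(d'.+2) -> Prop), convex_set U -> forall k,
    U (sp R d' m k) -> U (sp R d' m ((k + m) %% n)%N) -> U (pp R d' m k).
  move=> U hU k h1 h2; rewrite /pp; apply: hU => //; lra.
have kin : forall k, (k %% n < n)%N by move=> k; rewrite ltn_mod.
case: hcase => [[hP hQ]|[hQ hP]].
- (* coloring argument *)
  pose b k := if excluded_middle_informative (T ord0 (sp R d' m k)) then true else false.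
  have hb : forall k, (k < n)%N -> b ((k + m) %% n)%N = ~~ b k.
    move=> k hk.
    have hPk : exists i, S i (pp R d' m k) by apply: hP; apply/inPs; exists k.
    have [jx hx] : exists j, T j (sp R d' m k) by apply: hQ; apply/inQs; exists k.
    have [jy hy] : exists j, T j (sp R d' m ((k + m) %% n)%N).
      by apply: hQ; apply/inQs; exists ((k + m) %% n)%N.
    rewrite /b; case: excluded_middle_informative => h1;
      case: excluded_middle_informative => h2 //=.
    + exfalso; apply: (hdisj _ hPk); exists ord0; exact: mid.
    + case: (I2_cases jx) => ex; first by subst jx.
      case: (I2_cases jy) => ey; first by subst jy.
      subst jx jy.
      exfalso; apply: (hdisj _ hPk); exists ord_max; exact: mid.
  have hind : forall t, b ((t * m) %% n)%N = b 0%N (+) odd t.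
    elim=> [|t IH]; first by rewrite mul0n mod0n addbF.
    rewrite mulSn -modnDmr addnC hb ?kin // IH /=.
    by case: (b 0%N); case: (odd t).
  have := hind n; rewrite mulnC modnMl /n /= odd_double /=.
  by case: (b 0%N).
- have [i0 h0] : exists i, S i (sp R d' m 0) by apply: hQ; apply/inQs; exists 0%N.
  have [i1 h1] : exists i, S i (sp R d' m ((0 + m) %% n)%N).
    by apply: hQ; apply/inQs; exists ((0 + m) %% n)%N.
  rewrite (I1_eq i0) in h0; rewrite (I1_eq i1) in h1.
  have hT0 : exists j, T j (pp R d' m 0) by apply: hP; apply/inPs; exists 0%N.
  apply: (hdisj _ _ hT0); exists ord0; exact: mid.
Qed.



Lemma sep (R : realType) d' N (P' Q' : {fset 'rV[R]_(d'.+2)}) :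
  P' `<=` Ps R d' N.+1 -> Q' `<=` Qs R d' N.+1 ->
  (#|` P'| + #|` Q'| <= N)%N -> separable 1 2 P' Q'.
Proof.
set m := N.+1.
move=> hP hQ hc.
have [j hj hjQ] : exists2 j, (j < m.*2.+1)%N & sp R d' m j \notin Q'.
  case hh : (has (fun j => sp R d' m j \notin Q') (iota 0 m.*2.+1)).
    move/hasP: hh => [j]; rewrite mem_iota add0n => hj hn; by exists j.
  exfalso.
  have sub : Qs R d' m `<=` Q'.
    apply/fsubsetP => x /inQs [k hk ->].
    move/negbT/hasPn: hh => /(_ k); rewrite mem_iota add0n hk => /(_ isT).
    by rewrite negbK.
  have := fsubset_leq_card sub; rewrite card_Qs.
  move: hc; rewrite /m. lia.
pose W := fun x : 'rV[R]_(d'.+2) => lin (phi1 R m j) x <= cc R m /\ lin (phi2 R m j) x <= cc R m.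
pose H1 := fun x : 'rV[R]_(d'.+2) => cc R m < lin (phi1 R m j) x.
pose H2 := fun x : 'rV[R]_(d'.+2) => cc R m < lin (phi2 R m j) x.
exists (fun _ => W), (fun i : 'I_2 => if i == ord0 then H1 else H2).
split; first by move=> _; exact: convex_wedge.
split; first by move=> i; case: (i == ord0); exact: convex_half.
simpl; split.
  move=> x [_ [hx1 hx2]] [i]; case: (i == ord0); rewrite /H1 /H2 => h; lra.
left; split.
- move=> x hx; exists ord0; rewrite /W.
  have /inPs [k _ ->] : x \in Ps R d' m by move/fsubsetP: hP; apply.
  split; exact: lin_pp.
- move=> x hx.
  have /inQs [i hi ex] : x \in Qs R d' m by move/fsubsetP: hQ; apply.
  have hij : i != j.
    apply/eqP => e; subst; by rewrite hx in hjQ.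
  case: (@cover_lem R d' m i j hi hj hij) => h.
  + by exists ord0; rewrite eqxx /H1 ex.
  + by exists ord_max; rewrite /H2 ex.
Qed.

Theorem mainTheorem7 (R : realType) (d : nat) (hd : (2 <= d)%N) :
  (forall N : nat, exists P Q : {fset 'rV[R]_d},
     ~ separable 1 2 P Q /\
     (forall P' Q' : {fset 'rV[R]_d}, P' `<=` P -> Q' `<=` Q ->
        (#|` P'| + #|` Q'| <= N)%N -> separable 1 2 P' Q')) /\
  ~ helly_type (@separable R d 1 2).
Proof.
case: d hd => [|[|d']] // hd.
have part1 : forall N : nat, exists P Q : {fset 'rV[R]_(d'.+2)},
     ~ separable 1 2 P Q /\
     (forall P' Q' : {fset 'rV[R]_(d'.+2)}, P' `<=` P -> Q' `<=` Q ->
        (#|` P'| + #|` Q'| <= N)%N -> separable 1 2 P' Q').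
  move=> N; exists (Ps R d' N.+1), (Qs R d' N.+1); split; [exact: nonsep | exact: sep].
split => //.
move=> [m0 hm]. have [P [Q [hn hs]]] := part1 m0.
have [P' [Q' [h1 [h2 [h3 h4]]]]] := hm P Q hn.
exact: h4 (hs P' Q' h1 h2 h3).
Qed.
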